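(* Let $k$ be a field, $A,B$ abelian groups, $R$ an $A$-graded and $S$ a $B$-graded finite-dimensional Frobenius $k$-algebra with forms $\langle-,-\rangle_R$, $\langle-,-\rangle_S$, and $t:A\otimes B\to k^\times$ a bicharacter. Define on $R\otimes^tS$, for homogeneous $r,r'\in R$, $s,s'\in S$, $$\langle r\otimes s,r'\otimes s'\rangle=t(|r'|,|s|)\langle r,r'\rangle_R\langle s,s'\rangle_S,$$ extended bilinearly. Then $\langle-,-\rangle$ makes $R\otimes^tS$ a Frobenius algebra.
   Context: $|r|$ denotes the degree of a homogeneous element. The twisted tensor product $R\otimes^tS$ is the vector space $R\otimes S$ with multiplication $(r\otimes s)(r'\otimes s')=t(|r'|,|s|)\,rr'\otimes ss'$ for homogeneous elements. A Frobenius algebra is a finite-dimensional algebra with a nondegenerate bilinear form satisfying $\langle xy,z\rangle=\langle x,yz\rangle$. *)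

(* Defs.v *)
From HB Require Import structures.
From mathcomp Require Import all_boot all_order all_algebra falgebra.
Set Implicit Arguments. Unset Strict Implicit. Unset Printing Implicit Defensive.
Import GRing.Theory.
Local Open Scope ring_scope.


Definition grading (k : fieldType) (A : zmodType) (R : falgType k)
    (V : A -> {vspace R}) : Prop :=
  exists supp : seq A,
    [/\ uniq supp,
        (forall a, a \notin supp -> V a = 0%VS),
        (\sum_(a <- supp) V a)%VS = fullv%VS,
        directv (\sum_(a <- supp) V a)%VS
      & (forall a b (x y : R), x \in V a -> y \in V b -> (x * y)%R \in V (a + b)%R)].

(* A bicharacter A x B -> k^x (equivalently a hom A (x)_Z B -> k^x). *)
Definition bicharacter (k : fieldType) (A B : zmodType) (t : A -> B -> k) : Prop :=
  [/\ (forall a b, t a b != 0),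
      (forall a a' b, t (a + a') b = t a b * t a' b)
    & (forall a b b', t a (b + b') = t a b * t a b')].

Definition bilinear_form (k : fieldType) (V : vectType k) (f : V -> V -> k) : Prop :=
  (forall c x x' y, f (c *: x + x') y = c * f x y + f x' y) /\
  (forall c x y y', f x (c *: y + y') = c * f x y + f x y').

Definition frobenius_form (k : fieldType) (L : falgType k) (f : L -> L -> k) : Prop :=
  [/\ bilinear_form f,
      (forall x, (forall y, f x y = 0) -> x = 0),
      (forall y, (forall x, f x y = 0) -> y = 0)
    & (forall x y z, f (x * y) z = f x (y * z))].

(* iota : R -> S -> T exhibits T as the tensor product R (x)_k S:
   iota is bilinear, its image spans T and dim T = dim R * dim S. *)
Definition is_tensor_product (k : fieldType) (R S T : vectType k)
    (iota : R -> S -> T) : Prop :=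
  [/\ (forall c r r' s, iota (c *: r + r') s = c *: iota r s + iota r' s),
      (forall c r s s', iota r (c *: s + s') = c *: iota r s + iota r s'),
      (forall x : T, exists rs : seq (R * S), x = \sum_(p <- rs) iota p.1 p.2)
    & \dim {: T} = (\dim {: R} * \dim {: S})%N].

(* Main.v *)
Require Import Defs.
From HB Require Import structures.
From mathcomp Require Import all_boot all_order all_algebra falgebra.
From mathcomp Require Import ring.
Import GRing.Theory.
Local Open Scope ring_scope.
Set Implicit Arguments. Unset Strict Implicit.

Lemma lin0 (k : fieldType) (V W : lmodType k) (g : V -> W) :
  (forall c x y, g (c *: x + y) = c *: g x + g y) -> g 0 = 0.
Proof. by move=> H; have := H (-1) 0 0; rewrite scaler0 addr0 scaleN1r addNr. Qed.
Lemma linD (k : fieldType) (V W : lmodType k) (g : V -> W) :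
  (forall c x y, g (c *: x + y) = c *: g x + g y) -> forall x y, g (x + y) = g x + g y.
Proof. by move=> H x y; have := H 1 x y; rewrite !scale1r. Qed.
Lemma linZ (k : fieldType) (V W : lmodType k) (g : V -> W) :
  (forall c x y, g (c *: x + y) = c *: g x + g y) -> forall c x, g (c *: x) = c *: g x.
Proof. by move=> H c x; have := H c x 0; rewrite !addr0 (lin0 H) addr0. Qed.
Lemma lin_sum (k : fieldType) (V W : lmodType k) (g : V -> W) :
  (forall c x y, g (c *: x + y) = c *: g x + g y) ->
  forall (I : Type) (r : seq I) (F : I -> V), g (\sum_(i <- r) F i) = \sum_(i <- r) g (F i).
Proof. by move=> H I r F; apply: (big_morph g (linD H) (lin0 H)). Qed.

Lemma slin0 (k : fieldType) (V : lmodType k) (g : V -> k) :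
  (forall c x y, g (c *: x + y) = c * g x + g y) -> g 0 = 0.
Proof. by move=> H; have := H (-1) 0 0; rewrite scaler0 addr0 mulN1r addNr. Qed.
Lemma slinD (k : fieldType) (V : lmodType k) (g : V -> k) :
  (forall c x y, g (c *: x + y) = c * g x + g y) -> forall x y, g (x + y) = g x + g y.
Proof. by move=> H x y; have := H 1 x y; rewrite scale1r mul1r. Qed.
Lemma slinZ (k : fieldType) (V : lmodType k) (g : V -> k) :
  (forall c x y, g (c *: x + y) = c * g x + g y) -> forall c x, g (c *: x) = c * g x.
Proof. by move=> H c x; have := H c x 0; rewrite !addr0 (slin0 H) addr0. Qed.
Lemma slin_sum (k : fieldType) (V : lmodType k) (g : V -> k) :
  (forall c x y, g (c *: x + y) = c * g x + g y) ->
  forall (I : Type) (r : seq I) (F : I -> V), g (\sum_(i <- r) F i) = \sum_(i <- r) g (F i).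
Proof. by move=> H I r F; apply: (big_morph g (slinD H) (slin0 H)). Qed.

Lemma hbasis_seq (k : fieldType) (A : zmodType) (R : falgType k) (V : A -> {vspace R})
  (s : seq A) : directv (\sum_(a <- s) V a) ->
  exists P : seq (A * R), (forall p, p \in P -> p.2 \in V p.1) /\
     basis_of (\sum_(a <- s) V a)%VS (map snd P).
Proof.
elim: s => [|a s IH].
  by move=> _; exists [::]; split => //; rewrite big_nil; apply: nil_basis.
move=> dx0.
have dx : directv (V a + \sum_(b <- s) V b)%VS.
  by move: dx0; rewrite !directvE /= !big_cons.
rewrite big_cons.
have := dx; rewrite directv_addE => /and3P[_ dxs _].
have [P [HP bP]] := IH dxs.
exists ([seq (a, v) | v <- vbasis (V a)] ++ P); split.
  move=> p; rewrite mem_cat => /orP[/mapP[v vin ->]|/HP //].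
  by apply: vbasis_mem.
rewrite map_cat -map_comp map_id; apply: cat_basis => //.
  by move: dxs; rewrite !directvE /= => /eqP ->.
exact: (vbasisP (V a)).
Qed.

Lemma hbasis (k : fieldType) (A : zmodType) (R : falgType k) (V : A -> {vspace R}) :
  grading V -> exists n (e : 'I_n -> R) (d : 'I_n -> A),
    [/\ (forall i, e i \in V (d i)),
        (forall c : 'I_n -> k, \sum_i c i *: e i = 0 -> forall i, c i = 0)
      & (forall r, exists c : 'I_n -> k, r = \sum_i c i *: e i)].
Proof.
case=> supp [_ _ Hfull dx _].
have [P [HP bP]] := hbasis_seq dx.
rewrite Hfull in bP.
pose X := map snd P.
exists (size X), (fun i => X`_i), (fun i => (nth (0, 0) P i).1); split.
- move=> i; have Hi : (i < size P)%N by rewrite -(size_map snd); exact: ltn_ord.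
  rewrite /X (nth_map (0,0)) //; apply: HP; exact: mem_nth.
- move=> c Hc i; have := @freeP _ _ _ (in_tuple X) (basis_free bP).
  by move=> H; apply: (H c).
- move=> r; exists (fun i => coord (in_tuple X) i r).
  exact: (@coord_basis _ _ _ _ (in_tuple X) r bP (memvf r)).
Qed.

Lemma grading_ind (k : fieldType) (A : zmodType) (R : falgType k) (V : A -> {vspace R}) :
  grading V -> forall P : R -> Prop, P 0 ->
  (forall c x y, P x -> P y -> P (c *: x + y)) ->
  (forall a x, x \in V a -> P x) -> forall x, P x.
Proof.
move=> gV P P0 PC Ph x.
have [n [e [d [he _ hs]]]] := hbasis gV.
have [c ->] := hs x.
elim/big_rec: _ => // i y _ Py; apply: PC => //; exact: Ph (he i).
Qed.

Theorem mainTheorem3 (k : fieldType) (A B : zmodType)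
    (R S : falgType k) (VR : A -> {vspace R}) (VS : B -> {vspace S})
    (formR : R -> R -> k) (formS : S -> S -> k) (t : A -> B -> k)
    (T : falgType k) (iota : R -> S -> T) (formT : T -> T -> k) :
  grading VR -> grading VS ->
  frobenius_form formR -> frobenius_form formS ->
  bicharacter t ->
  is_tensor_product iota ->
  (* T = R (x)^t S : twisted multiplication on homogeneous pure tensors *)
  (forall a a' b b' (r r' : R) (s s' : S),
     r \in VR a -> r' \in VR a' -> s \in VS b -> s' \in VS b' ->
     iota r s * iota r' s' = t a' b *: iota (r * r') (s * s')) ->
  (* the bilinear form on R (x)^t S *)
  bilinear_form formT ->
  (forall a a' b b' (r r' : R) (s s' : S),
     r \in VR a -> r' \in VR a' -> s \in VS b -> s' \in VS b' ->
     formT (iota r s) (iota r' s') = t a' b * formR r r' * formS s s') ->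
  frobenius_form formT.
Proof.
move=> gR gS [[fRl fRr] ndRl ndRr assR] [[fSl fSr] ndSl ndSr assS] [tnz tD1 tD2]
  [iL iR ispan _] imul [fTl fTr] formTE.
have mR : forall a b (x y : R), x \in VR a -> y \in VR b -> x * y \in VR (a + b).
  by case: gR => ? [].
have mS : forall a b (x y : S), x \in VS a -> y \in VS b -> x * y \in VS (a + b).
  by case: gS => ? [].
have [nR [eR [dR [heR freeR spanR]]]] := hbasis gR.
have [nS [eS [dS [heS freeS spanS]]]] := hbasis gS.
have iL' : forall s, forall c x y, iota (c *: x + y) s = c *: iota x s + iota y s.
  by move=> s c x y; apply: iL.
have iR' : forall r, forall c x y, iota r (c *: x + y) = c *: iota r x + iota r y.
  by move=> r c x y; apply: iR.
have fTl' : forall z, forall c x y, formT (c *: x + y) z = c * formT x z + formT y z.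
  by move=> z c x y; apply: fTl.
have fTr' : forall z, forall c x y, formT z (c *: x + y) = c * formT z x + formT z y.
  by move=> z c x y; apply: fTr.
have fRl' : forall z, forall c x y, formR (c *: x + y) z = c * formR x z + formR y z.
  by move=> z c x y; apply: fRl.
have fRr' : forall z, forall c x y, formR z (c *: x + y) = c * formR z x + formR z y.
  by move=> z c x y; apply: fRr.
have fSl' : forall z, forall c x y, formS (c *: x + y) z = c * formS x z + formS y z.
  by move=> z c x y; apply: fSl.
have fSr' : forall z, forall c x y, formS z (c *: x + y) = c * formS z x + formS z y.
  by move=> z c x y; apply: fSr.
have F1 : forall a' b r r' s s', r' \in VR a' -> s \in VS b ->
    formT (iota r s) (iota r' s') = t a' b * formR r r' * formS s s'.
  move=> a' b r r' s s' hr' hs; move: r s'.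
  apply: (grading_ind gR) => [|c x y Hx Hy|a x hx] s'.
  - by rewrite (lin0 (iL' s)) (slin0 (fTl' _)) (slin0 (fRl' _)) mulr0 mul0r.
  - by rewrite iL' fTl' Hx Hy fRl'; ring.
  - move: s'; apply: (grading_ind gS) => [|c y z Hy Hz|b' y hy].
    + by rewrite (lin0 (iR' _)) (slin0 (fTr' _)) (slin0 (fSr' _)) mulr0.
    + by rewrite iR' fTr' Hy Hz fSr'; ring.
    + exact: formTE hx hr' hs hy.
have TdecS : forall x, exists xs : 'I_nS -> R, x = \sum_j iota (xs j) (eS j).
  move=> x; have [rs ->] := ispan x; elim: rs => [|p rs [xs IH]].
    exists (fun=> 0); rewrite big_nil big1 // => j _; exact: (lin0 (iL' _)).
  have [c Hc] := spanS p.2.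
  exists (fun j => c j *: p.1 + xs j).
  rewrite big_cons IH {1}Hc (lin_sum (iR' _)) -big_split; apply: eq_bigr => j _.
  by rewrite (linZ (iR' _)) iL'.
have TdecR : forall x, exists ys : 'I_nR -> S, x = \sum_i iota (eR i) (ys i).
  move=> x; have [rs ->] := ispan x; elim: rs => [|p rs [ys IH]].
    exists (fun=> 0); rewrite big_nil big1 // => j _; exact: (lin0 (iR' _)).
  have [c Hc] := spanR p.1.
  exists (fun j => c j *: p.2 + ys j).
  rewrite big_cons IH {1}Hc (lin_sum (iL' _)) -big_split; apply: eq_bigr => j _.
  by rewrite (linZ (iL' _)) iR'.
have Thom : forall P : T -> Prop, P 0 ->
    (forall c x y, P x -> P y -> P (c *: x + y)) ->
    (forall a b r s, r \in VR a -> s \in VS b -> P (iota r s)) -> forall x, P x.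
  move=> P P0 PC Ph x; have [xs ->] := TdecS x.
  elim/big_rec: _ => // j y _ Py; rewrite -[iota _ _]scale1r; apply: (PC) => //.
  move: (xs j); apply: (grading_ind gR) => [|c u v Hu Hv|a u hu].
  - by rewrite (lin0 (iL' _)).
  - by rewrite iL'; apply: (PC).
  - exact: Ph hu (heS j).
split.
- by split.
- move=> x Hx; have [xs Ex] := TdecS x; rewrite Ex in Hx *.
  suff Hxs : forall j, xs j = 0.
    by rewrite big1 // => j _; rewrite Hxs (lin0 (iL' _)).
  move=> j; apply: ndRl => r'; move: r'.
  apply: (grading_ind gR) => [|c y z Hy Hz|a' r' hr'].
  + exact: (slin0 (fRr' _)).
  + by rewrite fRr' Hy Hz mulr0 addr0.
  + have Hw : \sum_i (t a' (dS i) * formR (xs i) r') *: eS i = 0.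
      apply: ndSl => s'.
      rewrite (slin_sum (fSl' _)) -[RHS](Hx (iota r' s')) (slin_sum (fTl' _)).
      apply: eq_bigr => i _.
      by rewrite (slinZ (fSl' _)) (F1 a' (dS i) _ _ _ _ hr' (heS i)).
    have /eqP := freeS _ Hw j.
    by rewrite mulf_eq0 (negbTE (tnz _ _)) /= => /eqP.
- move=> y Hy; have [ys Ey] := TdecR y; rewrite Ey in Hy *.
  suff Hys : forall i, ys i = 0.
    by rewrite big1 // => i _; rewrite Hys (lin0 (iR' _)).
  move=> i; apply: ndSr => s; move: s.
  apply: (grading_ind gS) => [|c y1 z Hy1 Hz|b s hs].
  + exact: (slin0 (fSl' _)).
  + by rewrite fSl' Hy1 Hz mulr0 addr0.
  + have Hw : \sum_j (t (dR j) b * formS s (ys j)) *: eR j = 0.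
      apply: ndRr => r.
      rewrite (slin_sum (fRr' _)) -[RHS](Hy (iota r s)) (slin_sum (fTr' _)).
      apply: eq_bigr => j _.
      rewrite (slinZ (fRr' _)) (F1 (dR j) b _ _ _ _ (heR j) hs); ring.
    have /eqP := freeR _ Hw i.
    by rewrite mulf_eq0 (negbTE (tnz _ _)) /= => /eqP.
- move=> x; move: x; apply: (Thom) => [|c x1 x2 H1 H2|a1 b1 r1 s1 hr1 hs1] y z.
  + by rewrite mul0r !(slin0 (fTl' _)).
  + by rewrite mulrDl -scalerAl !fTl' H1 H2.
  + move: y z; apply: (Thom) => [|c y1 y2 H1 H2|a2 b2 r2 s2 hr2 hs2] z.
    * by rewrite mulr0 mul0r (slin0 (fTl' _)) (slin0 (fTr' _)).
    * by rewrite mulrDr mulrDl -scalerAr -scalerAl fTl' fTr' H1 H2.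
    * move: z; apply: (Thom) => [|c z1 z2 H1 H2|a3 b3 r3 s3 hr3 hs3].
      - by rewrite !mulr0 !(slin0 (fTr' _)).
      - by rewrite mulrDr -scalerAr !fTr' H1 H2.
      - rewrite (imul _ _ _ _ _ _ _ _ hr1 hr2 hs1 hs2).
        rewrite (imul _ _ _ _ _ _ _ _ hr2 hr3 hs2 hs3).
        rewrite (slinZ (fTl' _)) (slinZ (fTr' _)).
        rewrite (formTE _ _ _ _ _ _ _ _ (mR _ _ _ _ hr1 hr2) hr3 (mS _ _ _ _ hs1 hs2) hs3).
        rewrite (formTE _ _ _ _ _ _ _ _ hr1 (mR _ _ _ _ hr2 hr3) hs1 (mS _ _ _ _ hs2 hs3)).
        rewrite assR assS tD1 tD2; ring.
Qed.
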